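(* Let $f\in\mathrm{SL}(2,\mathbb{Z})$ be Anosov and let $l=l_{\mathcal{C}}(f)$ be its stable translation length on the Farey graph. Then \[|\operatorname{tr} f|\ \ge\ \operatorname{tr}\big(\mathcal{M}(2)^l\big)=(1+\sqrt2)^l+(1-\sqrt2)^l,\qquad \mathcal{M}(2)=\begin{pmatrix}2&1\\1&0\end{pmatrix}.\]
   Context: $f$ is Anosov if $|\operatorname{tr} f|>2$. The Farey graph has vertex set $\mathbb{Q}\cup\{\infty\}$ (vertices $p/q$ in lowest terms), $p/q$ and $r/s$ adjacent iff $|ps-qr|=1$, path metric $d_{\mathcal{C}}$ with unit edges; $\begin{pmatrix}a&b\\c&d\end{pmatrix}$ acts by $p/q\mapsto(ap+bq)/(cp+dq)$; $l_{\mathcal{C}}(f)=\liminf_{j\to\infty}d_{\mathcal{C}}(v,f^j v)/j$ for any vertex $v$. *)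

(* Defs.v *)
From Stdlib Require Import Reals ZArith.
Open Scope Z_scope.

Record mat2 := Mat2 { ma : Z; mb : Z; mc : Z; md : Z }.

Definition mat2_mul (M N : mat2) : mat2 :=
  Mat2 (ma M * ma N + mb M * mc N) (ma M * mb N + mb M * md N)
       (mc M * ma N + md M * mc N) (mc M * mb N + md M * md N).

Definition mat2_id : mat2 := Mat2 1 0 0 1.

Fixpoint mat2_pow (M : mat2) (n : nat) : mat2 :=
  match n with O => mat2_id | S k => mat2_mul M (mat2_pow M k) end.

Definition mat2_det (M : mat2) : Z := ma M * md M - mb M * mc M.
Definition mat2_tr (M : mat2) : Z := ma M + md M.

Definition in_SL2Z (M : mat2) : Prop := mat2_det M = 1.
Definition anosov (M : mat2) : Prop := Z.abs (mat2_tr M) > 2.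

Definition M2 : mat2 := Mat2 2 1 1 0.

(* Farey graph.  A vertex p/q (in lowest terms) of Q ∪ {∞} is encoded as a
   pair (p,q) with gcd p q = 1 and q > 0, or the pair (1,0) for ∞. *)
Definition is_vertex (v : Z * Z) : Prop :=
  Z.gcd (fst v) (snd v) = 1 /\ (0 < snd v \/ v = (1, 0)).

Definition infty : Z * Z := (1, 0).

Definition farey_adj (v w : Z * Z) : Prop :=
  is_vertex v /\ is_vertex w /\ Z.abs (fst v * snd w - snd v * fst w) = 1.

Inductive farey_path : nat -> Z * Z -> Z * Z -> Prop :=
| fp_nil : forall v, is_vertex v -> farey_path O v v
| fp_cons : forall n u v w, farey_adj u v -> farey_path n v w ->
    farey_path (S n) u w.

Definition farey_dist (v w : Z * Z) (n : nat) : Prop :=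
  farey_path n v w /\ forall m, farey_path m v w -> (n <= m)%nat.

Definition normalize (v : Z * Z) : Z * Z :=
  let (x, y) := v in
  if y <? 0 then (- x, - y) else if y =? 0 then (Z.abs x, 0) else (x, y).

Definition mat2_act (M : mat2) (v : Z * Z) : Z * Z :=
  normalize (ma M * fst v + mb M * snd v, mc M * fst v + md M * snd v).

Open Scope R_scope.

Definition is_liminf (u : nat -> R) (l : R) : Prop :=
  (forall eps, eps > 0 -> exists N, forall j, (j >= N)%nat -> u j > l - eps) /\
  (forall eps, eps > 0 -> forall N, exists j, (j >= N)%nat /\ u j < l + eps).

(* l_C(f) = liminf_{j->oo} d_C(v, f^j v) / j, computed at the vertex v = ∞ *)
Definition stable_translation_length (f : mat2) (l : R) : Prop :=
  exists d : nat -> nat,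
    (forall j, farey_dist infty (Nat.iter j (mat2_act f) infty) (d j)) /\
    is_liminf (fun j => INR (d j) / INR j) l.

(* Main.v *)
Require Import Defs.
From Stdlib Require Import Reals ZArith Lia Psatz List.
Import ListNotations.

Open Scope Z_scope.

Lemma mat2_ext : forall M N : mat2, ma M = ma N -> mb M = mb N -> mc M = mc N -> md M = md N -> M = N.
Proof. intros [a b c d] [a' b' c' d']; simpl; intros; subst; reflexivity. Qed.

Ltac mat_eq := apply mat2_ext; unfold mat2_mul, mat2_id; cbn [ma mb mc md]; ring.

Lemma mul_assoc : forall M N P, mat2_mul M (mat2_mul N P) = mat2_mul (mat2_mul M N) P.
Proof. intros [] [] []; mat_eq. Qed.
Lemma mul_id_l : forall M, mat2_mul mat2_id M = M.
Proof. intros []; mat_eq. Qed.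
Lemma mul_id_r : forall M, mat2_mul M mat2_id = M.
Proof. intros []; mat_eq. Qed.
Lemma det_mul : forall M N, mat2_det (mat2_mul M N) = mat2_det M * mat2_det N.
Proof. intros [] []; unfold mat2_det; simpl; ring. Qed.

Definition mv (M : mat2) (v : Z * Z) : Z * Z :=
  (ma M * fst v + mb M * snd v, mc M * fst v + md M * snd v).

Lemma act_mv : forall M v, mat2_act M v = normalize (mv M v).
Proof. reflexivity. Qed.

Lemma mv_mul : forall M N v, mv (mat2_mul M N) v = mv M (mv N v).
Proof. intros [] [] [x y]; unfold mv; simpl; f_equal; ring. Qed.

Lemma mv_opp : forall M x y, mv M (-x, -y) = (- fst (mv M (x,y)), - snd (mv M (x,y))).
Proof. intros [] x y; unfold mv; simpl; f_equal; ring. Qed.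

Lemma normalize_cases : forall x y, normalize (x,y) = (x,y) \/ normalize (x,y) = (-x,-y).
Proof.
  intros x y; unfold normalize.
  destruct (y <? 0); [right; reflexivity|].
  destruct (y =? 0) eqn:E; [|left; reflexivity].
  apply Z.eqb_eq in E; subst.
  destruct (Z.abs_spec x) as [[? ->]|[? ->]]; [left|right]; f_equal; lia.
Qed.

Lemma normalize_opp : forall x y, normalize (-x,-y) = normalize (x,y).
Proof.
  intros x y; unfold normalize.
  destruct (Z.ltb_spec y 0); destruct (Z.ltb_spec (-y) 0);
  destruct (Z.eqb_spec y 0); destruct (Z.eqb_spec (-y) 0);
  try lia; f_equal; try lia.
Qed.

Lemma normalize_vertex : forall v, is_vertex v -> normalize v = v.
Proof.
  intros [p q] [Hg [Hq|Hq]]; unfold normalize; simpl in *.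
  - replace (q <? 0) with false by (symmetry; apply Z.ltb_ge; lia).
    replace (q =? 0) with false by (symmetry; apply Z.eqb_neq; lia). reflexivity.
  - inversion Hq; subst. reflexivity.
Qed.

Lemma normalize_is_vertex : forall x y, Z.gcd x y = 1 -> is_vertex (normalize (x,y)).
Proof.
  intros x y H; unfold normalize, is_vertex.
  destruct (y <? 0) eqn:E1.
  - apply Z.ltb_lt in E1; simpl. rewrite Z.gcd_opp_l, Z.gcd_opp_r. split; [assumption|left; lia].
  - destruct (y =? 0) eqn:E2.
    + apply Z.eqb_eq in E2; subst. rewrite Z.gcd_0_r in H. simpl. rewrite H.
      split; [reflexivity|right; reflexivity].
    + apply Z.ltb_ge in E1; apply Z.eqb_neq in E2. simpl. split; [assumption|left; lia].
Qed.

Lemma mv_gcd : forall M p q, mat2_det M = 1 -> Z.gcd p q = 1 ->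
  Z.gcd (fst (mv M (p,q))) (snd (mv M (p,q))) = 1.
Proof.
  intros [a b c d] p q Hd Hg; unfold mat2_det in Hd; simpl in Hd.
  apply Z.bezout_1_gcd.
  destruct (Z.gcd_bezout _ _ _ Hg) as [u [v Huv]].
  unfold mv; simpl.
  exists (u*d - v*c), (- u*b + v*a).
  rewrite <- Huv.
  transitivity (u*p*(a*d-b*c) + v*q*(a*d-b*c)); [ring| rewrite Hd; ring].
Qed.

Lemma act_vertex : forall M v, mat2_det M = 1 -> is_vertex v -> is_vertex (mat2_act M v).
Proof.
  intros M [p q] Hd [Hg _]; rewrite act_mv.
  destruct (mv M (p,q)) as [x y] eqn:E.
  apply normalize_is_vertex.
  pose proof (mv_gcd M p q Hd Hg) as H; rewrite E in H; exact H.
Qed.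

Lemma normalize_mv_norm : forall M x y, normalize (mv M (normalize (x,y))) = normalize (mv M (x,y)).
Proof.
  intros M x y. destruct (normalize_cases x y) as [E|E]; rewrite E; [reflexivity|].
  rewrite mv_opp. destruct (mv M (x,y)) as [u w]; simpl. apply normalize_opp.
Qed.

Lemma act_mul : forall M N v, mat2_act (mat2_mul M N) v = mat2_act M (mat2_act N v).
Proof.
  intros M N [x y]. rewrite !act_mv, mv_mul.
  destruct (mv N (x,y)) as [u w]. symmetry; apply normalize_mv_norm.
Qed.

Lemma act_id : forall v, is_vertex v -> mat2_act mat2_id v = v.
Proof.
  intros [p q] H; rewrite act_mv.
  replace (mv mat2_id (p,q)) with (p,q) by (unfold mv, mat2_id; cbn [fst snd ma mb mc md]; f_equal; ring).
  apply normalize_vertex; exact H.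
Qed.

Definition vdet (v w : Z * Z) : Z := fst v * snd w - snd v * fst w.

Lemma vdet_norm_l : forall x y w, Z.abs (vdet (normalize (x,y)) w) = Z.abs (vdet (x,y) w).
Proof.
  intros x y w. destruct (normalize_cases x y) as [E|E]; rewrite E; [reflexivity|].
  unfold vdet; simpl. rewrite <- Z.abs_opp. f_equal. ring.
Qed.
Lemma vdet_norm_r : forall x y w, Z.abs (vdet w (normalize (x,y))) = Z.abs (vdet w (x,y)).
Proof.
  intros x y w. destruct (normalize_cases x y) as [E|E]; rewrite E; [reflexivity|].
  unfold vdet; simpl. rewrite <- Z.abs_opp. f_equal. ring.
Qed.

Lemma vdet_mv : forall M v w, vdet (mv M v) (mv M w) = mat2_det M * vdet v w.
Proof. intros [] [] []; unfold vdet, mv, mat2_det; simpl; ring. Qed.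

Lemma adj_iff : forall v w, farey_adj v w <-> is_vertex v /\ is_vertex w /\ Z.abs (vdet v w) = 1.
Proof. intros; unfold farey_adj, vdet; tauto. Qed.

Lemma act_adj : forall M v w, mat2_det M = 1 -> farey_adj v w -> farey_adj (mat2_act M v) (mat2_act M w).
Proof.
  intros M v w Hd H. apply adj_iff in H as (Hv & Hw & H). apply adj_iff.
  split; [apply act_vertex; auto|]. split; [apply act_vertex; auto|].
  rewrite !act_mv. destruct (mv M v) as [x y] eqn:E1. destruct (mv M w) as [x' y'] eqn:E2.
  rewrite vdet_norm_l, vdet_norm_r, <- E1, <- E2, vdet_mv, Hd, Z.mul_1_l. exact H.
Qed.

Lemma adj_sym : forall v w, farey_adj v w -> farey_adj w v.
Proof.
  intros v w H. apply adj_iff in H as (Hv & Hw & H). apply adj_iff. split; [auto|split;[auto|]].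
  replace (vdet w v) with (- vdet v w) by (unfold vdet; ring). rewrite Z.abs_opp; exact H.
Qed.

Lemma path_vertex_l : forall n v w, farey_path n v w -> is_vertex v.
Proof. intros n v w H; destruct H as [v Hv|n u v w Ha _]; [exact Hv| exact (proj1 Ha)]. Qed.
Lemma path_vertex_r : forall n v w, farey_path n v w -> is_vertex w.
Proof. intros n v w H; induction H; auto. Qed.

Lemma path_app : forall m u v, farey_path m u v -> forall n w, farey_path n v w -> farey_path (m+n) u w.
Proof.
  intros m u v H; induction H; intros; simpl; auto.
  econstructor; eauto.
Qed.

Lemma path_one : forall u v, farey_adj u v -> farey_path 1 u v.
Proof.
  intros u v H. econstructor; [exact H|]. constructor. exact (proj1 (proj2 H)).
Qed.

Lemma path_rev : forall n u v, farey_path n u v -> farey_path n v u.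
Proof.
  intros n u v H; induction H.
  - constructor; auto.
  - replace (S n) with (n + 1)%nat by lia. eapply path_app; [exact IHfarey_path|].
    apply path_one, adj_sym; auto.
Qed.

Lemma path_act : forall M n u v, mat2_det M = 1 -> farey_path n u v ->
  farey_path n (mat2_act M u) (mat2_act M v).
Proof.
  intros M n u v Hd H; induction H.
  - constructor; apply act_vertex; auto.
  - econstructor; [apply act_adj; eauto| exact IHfarey_path].
Qed.

Lemma dist_le : forall u v n m, farey_dist u v n -> farey_path m u v -> (n <= m)%nat.
Proof. intros u v n m [_ H] Hp; apply H; auto. Qed.

Lemma dist_unique : forall u v n m, farey_dist u v n -> farey_dist u v m -> n = m.
Proof.
  intros u v n m H1 H2. pose proof (dist_le _ _ _ _ H1 (proj1 H2)).
  pose proof (dist_le _ _ _ _ H2 (proj1 H1)). lia.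
Qed.

Open Scope Z_scope.

Definition conn (g : mat2) : Prop := exists n, farey_path n infty (mat2_act g infty).

Lemma infty_vertex : is_vertex infty.
Proof. unfold is_vertex, infty; simpl. split; [reflexivity| right; reflexivity]. Qed.

Lemma conn_mul : forall h g, mat2_det h = 1 -> conn h -> conn g -> conn (mat2_mul h g).
Proof.
  intros h g Hd [n1 H1] [n2 H2]. exists (n1 + n2)%nat.
  rewrite act_mul. eapply path_app; [exact H1|]. apply path_act; auto.
Qed.

Definition Tm (k : Z) : mat2 := Mat2 1 k 0 1.
Definition Sm : mat2 := Mat2 0 (-1) 1 0.
Definition Si : mat2 := Mat2 0 1 (-1) 0.

Lemma conn_T : forall k, conn (Tm k).
Proof.
  intros k; exists 0%nat. unfold mat2_act, Tm, infty, normalize; cbn [fst snd ma mb mc md].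
  replace (0 * 1 + 1 * 0) with 0 by ring. replace (1*1+k*0) with 1 by ring. simpl.
  constructor. apply infty_vertex.
Qed.

Lemma conn_S : conn Sm.
Proof.
  exists 1%nat. unfold mat2_act, Sm, infty, normalize; cbn [fst snd ma mb mc md]. simpl.
  apply path_one. apply adj_iff. split; [apply infty_vertex|]. split.
  - unfold is_vertex; simpl. split; [reflexivity| left; lia].
  - unfold vdet; simpl. reflexivity.
Qed.

Lemma exists_k : forall x c, c <> 0 -> exists k, Z.abs (x - 2*k*c) <= Z.abs c.
Proof.
  intros x c Hc. set (C := Z.abs c). assert (HC : 0 < C) by (unfold C; lia).
  pose proof (Z.mod_pos_bound (x + C) (2*C) ltac:(lia)) as Hb.
  pose proof (Z_div_mod_eq_full (x + C) (2*C)) as He.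
  set (q := (x + C) / (2*C)) in *. set (r := (x + C) mod (2*C)) in *.
  destruct (Z_lt_le_dec 0 c).
  - exists q. assert (C = c) by (unfold C; lia). subst C. rewrite <- H in *. lia.
  - exists (-q). assert (C = -c) by (unfold C; lia). lia.
Qed.

Definition nonneg (A : mat2) : Prop := 0 <= ma A /\ 0 <= mb A /\ 0 <= mc A /\ 0 <= md A.

Definition reduced (f : mat2) : Prop :=
  exists g gi A, mat2_mul g gi = mat2_id /\ mat2_mul gi g = mat2_id /\
    mat2_det g = 1 /\ mat2_det gi = 1 /\ f = mat2_mul g (mat2_mul A gi) /\
    nonneg A /\ mat2_det A = 1 /\ conn g.

Lemma sq_le_of_abs : forall e c, Z.abs e <= Z.abs c -> e*e <= c*c.
Proof. intros e c H. rewrite <- (Z.abs_square e), <- (Z.abs_square c).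
  apply Z.mul_le_mono_nonneg; lia. Qed.
Lemma hb_lemma : forall B C E T, E*E + 4*(B*C) = T*T-4 -> 3 <= T -> T*T - 4 <= E*E -> Z.abs E <= Z.abs C -> C <> 0 -> Z.abs B < Z.abs C.
Proof.
  intros B C E T H1 H2 H3 H4 H5.
  pose proof (sq_le_of_abs _ _ H4) as H6.
  assert (H7: 4*(B*C) <= 0) by lia.
  assert (H8: -(4*(B*C)) <= C*C - 5) by nia.
  rewrite <- (Z.abs_square C) in H8.
  assert (H9 : Z.abs (B*C) = - (B*C)) by lia.
  rewrite Z.abs_mul in H9.
  assert (0 < Z.abs C) by lia.
  nia.
Qed.
Lemma abs_lt_sum : forall e t, e*e < t*t - 4 -> 0 < t -> Z.abs e < t.
Proof. intros e t H Ht. destruct (Z.abs_spec e) as [[? ->]|[? ->]]; nia. Qed.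
Lemma pos_of_mul_pos : forall x y, 0 < x*y -> 0 < y -> 0 < x.
Proof. intros; nia. Qed.
Lemma neg_of_mul_pos : forall x y, 0 < x*y -> y < 0 -> x < 0.
Proof. intros; nia. Qed.

Lemma conn_id : conn mat2_id.
Proof. exists 0%nat. rewrite act_id by apply infty_vertex. constructor; apply infty_vertex. Qed.

Lemma reduced_base : forall A, nonneg A -> mat2_det A = 1 -> reduced A.
Proof.
  intros A H1 H2. exists mat2_id, mat2_id, A.
  split; [apply mul_id_l|]. split; [apply mul_id_l|]. split; [reflexivity|]. split; [reflexivity|].
  split; [rewrite mul_id_l, mul_id_r; reflexivity|]. split; [exact H1|]. split; [exact H2|]. apply conn_id.
Qed.

Lemma conj_comp : forall X Y Z M Mi N Ni, X = mat2_mul M (mat2_mul Y Mi) -> Y = mat2_mul N (mat2_mul Z Ni) ->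
  X = mat2_mul (mat2_mul M N) (mat2_mul Z (mat2_mul Ni Mi)).
Proof. intros; subst; rewrite !mul_assoc; reflexivity. Qed.

Lemma inv_comp : forall M Mi N Ni, mat2_mul M Mi = mat2_id -> mat2_mul N Ni = mat2_id ->
  mat2_mul (mat2_mul M N) (mat2_mul Ni Mi) = mat2_id.
Proof.
  intros M Mi N Ni H1 H2. rewrite !mul_assoc. rewrite <- (mul_assoc M N Ni), H2, mul_id_r. exact H1.
Qed.

Lemma reduced_conj : forall X Y M Mi, X = mat2_mul M (mat2_mul Y Mi) ->
  mat2_mul M Mi = mat2_id -> mat2_mul Mi M = mat2_id -> mat2_det M = 1 -> mat2_det Mi = 1 -> conn M ->
  reduced Y -> reduced X.
Proof.
  intros X Y M Mi HX H1 H2 H3 H4 H5 (g & gi & A & G1 & G2 & G3 & G4 & G5 & G6 & G7 & G8).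
  exists (mat2_mul M g), (mat2_mul gi Mi), A. split; [|split; [|split; [|split; [|split; [|split; [|split]]]]]]; auto.
  - apply inv_comp; auto.
  - apply inv_comp; auto.
  - rewrite det_mul, H3, G3; ring.
  - rewrite det_mul, H4, G4; ring.
  - eapply conj_comp; eauto.
  - apply conn_mul; auto.
Qed.

Lemma reduce_aux : forall n f, (Z.abs_nat (mc f) < n)%nat -> mat2_det f = 1 -> 3 <= mat2_tr f -> reduced f.
Proof.
  induction n as [|n IH]; intros f Hn Hd Ht; [lia|].
  destruct f as [a b c d]; unfold mat2_det, mat2_tr in *; cbn [ma mb mc md] in *.
  assert (Hc : c <> 0) by (intro; subst; assert (Had1 : a * d = 1) by lia; destruct (Z.eq_mul_1 _ _ Had1); subst; lia).
  destruct (exists_k (a - d) c Hc) as [k Hk].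
  set (a1 := a - k*c). set (d1 := d + k*c). set (b1 := b + k*(a-d) - k*k*c).
  assert (Hf1 : Mat2 a b c d = mat2_mul (Tm k) (mat2_mul (Mat2 a1 b1 c d1) (Tm (-k)))).
  { unfold a1, b1, d1, Tm. mat_eq. }
  assert (Hdet1 : a1 * d1 - b1 * c = 1) by (transitivity (a*d - b*c); [unfold a1, b1, d1; ring | exact Hd]).
  assert (Htr1 : a1 + d1 = a + d) by (unfold a1, d1; ring).
  assert (Hdisc : (a1 - d1)*(a1-d1) + 4 * (b1 * c) = (a+d)*(a+d) - 4).
  { transitivity ((a1+d1)*(a1+d1) - 4*(a1*d1 - b1*c)); [ring| rewrite Hdet1, Htr1; ring]. }
  assert (He : a1 - d1 = a - d - 2*k*c) by (unfold a1, d1; ring).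
  assert (HTT : mat2_mul (Tm k) (Tm (-k)) = mat2_id) by (unfold Tm; mat_eq).
  assert (HTT' : mat2_mul (Tm (-k)) (Tm k) = mat2_id) by (unfold Tm; mat_eq).
  assert (HSS : mat2_mul Sm Si = mat2_id) by (unfold Sm, Si; mat_eq).
  assert (HSS' : mat2_mul Si Sm = mat2_id) by (unfold Sm, Si; mat_eq).
  assert (HdT : forall k, mat2_det (Tm k) = 1) by (intros; unfold mat2_det, Tm; cbn [ma mb mc md]; ring).
  assert (HdS : mat2_det Sm = 1) by reflexivity.
  assert (HdSi : mat2_det Si = 1) by reflexivity.
  apply (reduced_conj _ _ _ _ Hf1 HTT HTT' (HdT k) (HdT (-k)) (conn_T k)).
  assert (Hf2 : Mat2 a1 b1 c d1 = mat2_mul Sm (mat2_mul (Mat2 d1 (-c) (-b1) a1) Si)) by (unfold Sm, Si; mat_eq).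
  assert (Hdet2 : mat2_det (Mat2 d1 (-c) (-b1) a1) = 1).
  { unfold mat2_det; cbn [ma mb mc md]. rewrite <- Hdet1; ring. }
  destruct (Z_lt_le_dec ((a1 - d1)*(a1-d1)) ((a+d)*(a+d) - 4)) as [Hlt|Hge].
  - assert (Hbc : 0 < b1 * c) by lia.
    assert (Had : Z.abs (a1 - d1) < a1 + d1) by (apply abs_lt_sum; lia).
    destruct (Z_lt_le_dec 0 c).
    + apply reduced_base; [|exact Hdet1].
      pose proof (pos_of_mul_pos _ _ Hbc l).
      unfold nonneg; cbn [ma mb mc md]; lia.
    + apply (reduced_conj _ _ _ _ Hf2 HSS HSS' HdS HdSi conn_S).
      apply reduced_base; [|exact Hdet2].
      assert (c < 0) by lia.
      pose proof (neg_of_mul_pos _ _ Hbc H).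
      unfold nonneg; cbn [ma mb mc md]; lia.
  - apply (reduced_conj _ _ _ _ Hf2 HSS HSS' HdS HdSi conn_S).
    assert (Hb1 : Z.abs b1 < Z.abs c).
    { apply (hb_lemma b1 c (a1 - d1) (a+d)); try lia. }
    apply IH; unfold mat2_tr; cbn [ma mb mc md]; try lia.
Qed.

Lemma reduce : forall f, mat2_det f = 1 -> 3 <= mat2_tr f -> reduced f.
Proof. intros f H1 H2. apply (reduce_aux (S (Z.abs_nat (mc f)))); auto. Qed.

Open Scope Z_scope.

Definition Rm : mat2 := Mat2 1 1 0 1.
Definition Lm : mat2 := Mat2 1 0 1 1.
Definition lett (b : bool) : mat2 := if b then Rm else Lm.
Definition prodw (w : list bool) : mat2 := fold_right (fun b M => mat2_mul (lett b) M) mat2_id w.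

Lemma prodw_app : forall u v, prodw (u ++ v) = mat2_mul (prodw u) (prodw v).
Proof.
  induction u as [|b u IH]; intros v; simpl.
  - rewrite mul_id_l; reflexivity.
  - rewrite IH, mul_assoc; reflexivity.
Qed.

Lemma prodw_snoc : forall u b, prodw (u ++ [b]) = mat2_mul (prodw u) (lett b).
Proof. intros; rewrite prodw_app; simpl; rewrite mul_id_r; reflexivity. Qed.

Lemma nonneg_mul : forall M N, nonneg M -> nonneg N -> nonneg (mat2_mul M N).
Proof. intros [a b c d] [a1 b1 c1 d1] (?&?&?&?) (?&?&?&?); unfold nonneg, mat2_mul; cbn [ma mb mc md] in *; repeat split; nia. Qed.

Lemma prodw_nonneg : forall w, nonneg (prodw w).
Proof.
  induction w as [|b w IH]; simpl.
  - unfold nonneg; simpl; lia.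
  - apply nonneg_mul; auto. destruct b; unfold nonneg; simpl; lia.
Qed.

Lemma prodw_det : forall w, mat2_det (prodw w) = 1.
Proof.
  induction w as [|b w IH]; simpl; [reflexivity|].
  rewrite det_mul, IH. destruct b; reflexivity.
Qed.

Lemma nn_split : forall a b c d, 0 <= a -> 0 <= b -> 0 <= c -> 0 <= d -> a*d - b*c = 1 ->
  (a = 1 /\ b = 0 /\ c = 0 /\ d = 1) \/ (c <= a /\ d <= b) \/ (a <= c /\ b <= d).
Proof.
  intros a b c d Ha Hb Hc Hd H.
  destruct (Z_le_gt_dec c a); destruct (Z_le_gt_dec d b); try tauto.
  -
    destruct (Z_le_gt_dec a c).
    + right; right; lia.
    + left. assert (b = 0 /\ c = 0) by nia. destruct H0; subst.
      assert (a * d = 1) by lia. destruct (Z.eq_mul_1 _ _ H0); subst; lia.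
  -
    exfalso. nia.
  - right; right; lia.
Qed.

Lemma decomp_aux : forall n A, (Z.to_nat (ma A + mb A + mc A + md A) < n)%nat -> nonneg A -> mat2_det A = 1 ->
  exists w, prodw w = A.
Proof.
  induction n as [|n IH]; intros A Hn HA Hd; [lia|].
  destruct A as [a b c d]; destruct HA as (Ha&Hb&Hc&Hdd); unfold mat2_det in Hd; cbn [ma mb mc md] in *.
  assert (1 <= d) by (destruct (Z.eq_dec d 0); [subst; nia|lia]).
  assert (1 <= a) by (destruct (Z.eq_dec a 0); [subst; nia|lia]).
  destruct (nn_split a b c d Ha Hb Hc Hdd Hd) as [(->&->&->&->)|[[H1 H2]|[H1 H2]]].
  - exists []; reflexivity.
  - destruct (IH (Mat2 (a - c) (b - d) c d)) as [w Hw].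
    + cbn [ma mb mc md]. lia.
    + unfold nonneg; cbn [ma mb mc md]; lia.
    + unfold mat2_det; cbn [ma mb mc md]. rewrite <- Hd; ring.
    + exists (true :: w). simpl. rewrite Hw. unfold Rm; mat_eq.
  - destruct (IH (Mat2 a b (c - a) (d - b))) as [w Hw].
    + cbn [ma mb mc md]. lia.
    + unfold nonneg; cbn [ma mb mc md]; lia.
    + unfold mat2_det; cbn [ma mb mc md]. rewrite <- Hd; ring.
    + exists (false :: w). simpl. rewrite Hw. unfold Lm; mat_eq.
Qed.

Lemma decomp : forall A, nonneg A -> mat2_det A = 1 -> exists w, prodw w = A.
Proof. intros A H1 H2. eapply decomp_aux; eauto. Qed.

Definition col1 (P : mat2) : Z * Z := (ma P, mc P).
Definition col2 (P : mat2) : Z * Z := (mb P, md P).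
Definition colsum (P : mat2) : Z * Z := (ma P + mb P, mc P + md P).

Lemma nn_d_pos : forall P, nonneg P -> mat2_det P = 1 -> 1 <= md P /\ 1 <= ma P.
Proof.
  intros [a b c d] (Ha&Hb&Hc&Hd) H; unfold mat2_det in H; cbn [ma mb mc md] in *.
  split; [destruct (Z.eq_dec d 0)|destruct (Z.eq_dec a 0)]; subst; nia.
Qed.

Lemma col1_vertex : forall P, nonneg P -> mat2_det P = 1 -> is_vertex (col1 P).
Proof.
  intros P HP Hd. pose proof (nn_d_pos P HP Hd) as [H1 H2].
  destruct P as [a b c d]; destruct HP as (Ha&Hb&Hc&Hdd); unfold mat2_det in Hd; unfold col1, is_vertex; cbn [ma mb mc md fst snd] in *.
  split.
  - apply Z.bezout_1_gcd. exists d, (-b). rewrite <- Hd; ring.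
  - destruct (Z.eq_dec c 0); [right|left; lia]. subst.
    assert (a * d = 1) by lia. destruct (Z.eq_mul_1 _ _ H); subst; [reflexivity|lia].
Qed.

Lemma col2_vertex : forall P, nonneg P -> mat2_det P = 1 -> is_vertex (col2 P).
Proof.
  intros P HP Hd. pose proof (nn_d_pos P HP Hd) as [H1 H2].
  destruct P as [a b c d]; destruct HP as (Ha&Hb&Hc&Hdd); unfold mat2_det in Hd; unfold col2, is_vertex; cbn [ma mb mc md fst snd] in *.
  split.
  - apply Z.bezout_1_gcd. exists (-c), a. rewrite <- Hd; ring.
  - left; lia.
Qed.

Lemma colsum_vertex : forall P, nonneg P -> mat2_det P = 1 -> is_vertex (colsum P).
Proof.
  intros P HP Hd. pose proof (nn_d_pos P HP Hd) as [H1 H2].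
  destruct P as [a b c d]; destruct HP as (Ha&Hb&Hc&Hdd); unfold mat2_det in Hd; unfold colsum, is_vertex; cbn [ma mb mc md fst snd] in *.
  split.
  - apply Z.bezout_1_gcd. exists d, (-b). rewrite <- Hd; ring.
  - left; lia.
Qed.

Lemma adj_c1_sum : forall P, nonneg P -> mat2_det P = 1 -> farey_adj (col1 P) (colsum P).
Proof.
  intros P HP Hd. apply adj_iff. split; [apply col1_vertex; auto|]. split; [apply colsum_vertex; auto|].
  destruct P as [a b c d]; unfold mat2_det in Hd; unfold vdet, col1, colsum; cbn [ma mb mc md fst snd] in *.
  replace (a * (c + d) - c * (a + b)) with (a*d - b*c) by ring. rewrite Hd; reflexivity.
Qed.

Lemma adj_c2_sum : forall P, nonneg P -> mat2_det P = 1 -> farey_adj (col2 P) (colsum P).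
Proof.
  intros P HP Hd. apply adj_iff. split; [apply col2_vertex; auto|]. split; [apply colsum_vertex; auto|].
  destruct P as [a b c d]; unfold mat2_det in Hd; unfold vdet, col2, colsum; cbn [ma mb mc md fst snd] in *.
  replace (b * (c + d) - d * (a + b)) with (-(a*d - b*c)) by ring. rewrite Hd; reflexivity.
Qed.

Definition sigma (P : mat2) (v : Z * Z) : Z :=
  (md P * fst v - mb P * snd v) * (- mc P * fst v + ma P * snd v).

Lemma cross_helper : forall p1 q1 p2 q2, p1 * q1 < 0 -> 0 < p2 * q2 -> Z.abs (p1 * q2 - q1 * p2) = 1 -> False.
Proof.
  intros p1 q1 p2 q2 H1 H2 H3.
  assert (HXY : (p1*q2) * (q1*p2) < 0).
  { replace ((p1*q2) * (q1*p2)) with ((p1*q1)*(p2*q2)) by ring. nia. }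
  set (X := p1*q2) in *. set (Y := q1*p2) in *.
  assert ((0 < X /\ Y < 0) \/ (X < 0 /\ 0 < Y)) by nia. lia.
Qed.

Lemma sigma_cross : forall P u v, mat2_det P = 1 -> farey_adj u v -> sigma P u < 0 -> 0 < sigma P v -> False.
Proof.
  intros P [p q] [r s] Hd Hadj H1 H2. apply adj_iff in Hadj as (_&_&H).
  destruct P as [a b c d]; unfold mat2_det in Hd; unfold sigma, vdet in *; cbn [ma mb mc md fst snd] in *.
  apply (cross_helper (d*p - b*q) (-c*p + a*q) (d*r - b*s) (-c*r + a*s)); auto.
  rewrite <- H. f_equal.
  transitivity ((a*d - b*c) * (p*s - q*r)); [ring| rewrite Hd; ring].
Qed.

Lemma sigma_zero : forall P v, nonneg P -> mat2_det P = 1 -> is_vertex v -> sigma P v = 0 ->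
  v = col1 P \/ v = col2 P.
Proof.
  intros P [p q] HP Hd Hv H. pose proof (nn_d_pos P HP Hd) as [H1 H2].
  destruct P as [a b c d]; destruct HP as (Ha&Hb&Hc&Hdd); unfold mat2_det in Hd;
  unfold sigma, col1, col2 in *; cbn [ma mb mc md fst snd] in *.
  destruct Hv as [Hg Hq]; cbn [fst snd] in *.
  apply Z.mul_eq_0 in H as [H|H].
  -
    set (lam := a*q - c*p).
    assert (Ep : p = b * lam).
    { unfold lam. transitivity (p*(a*d-b*c)); [rewrite Hd; ring|]. transitivity (a*(d*p - b*q) + b*(a*q-c*p)); [ring|]. rewrite H; ring. }
    assert (Eq : q = d * lam).
    { unfold lam. transitivity (q*(a*d-b*c)); [rewrite Hd; ring|]. transitivity (c*(d*p - b*q) + d*(a*q-c*p)); [ring|]. rewrite H; ring. }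
    assert (Hl : (lam | 1)).
    { rewrite <- Hg. apply Z.gcd_greatest; [exists b; lia|exists d; lia]. }
    destruct (Z.divide_1_r _ Hl) as [Hl1|Hl1]; rewrite Hl1 in *.
    + right. f_equal; lia.
    + exfalso. destruct Hq as [Hq|Hq]; [nia|]. inversion Hq. lia.
  - set (mu := d*p - b*q).
    assert (Ep : p = a * mu).
    { unfold mu. transitivity (p*(a*d-b*c)); [rewrite Hd; ring|]. transitivity (a*(d*p-b*q) + b*(-c*p + a*q)); [ring|]. rewrite H; ring. }
    assert (Eq : q = c * mu).
    { unfold mu. transitivity (q*(a*d-b*c)); [rewrite Hd; ring|]. transitivity (c*(d*p-b*q) + d*(-c*p + a*q)); [ring|]. rewrite H; ring. }
    assert (Hl : (mu | 1)).
    { rewrite <- Hg. apply Z.gcd_greatest; [exists a; lia|exists c; lia]. }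
    destruct (Z.divide_1_r _ Hl) as [Hl1|Hl1]; rewrite Hl1 in *.
    + left. f_equal; lia.
    + exfalso. destruct Hq as [Hq|Hq]; [nia|]. inversion Hq. lia.
Qed.

Lemma separation : forall P, nonneg P -> mat2_det P = 1 -> forall m u z, farey_path m u z ->
  sigma P u <= 0 -> 0 < sigma P z -> exists i, (i < m)%nat /\ (farey_path i u (col1 P) \/ farey_path i u (col2 P)).
Proof.
  intros P HP Hd m u z Hp; induction Hp as [v Hv|n u v w Ha Hp IH]; intros H1 H2.
  - lia.
  - destruct (Z.eq_dec (sigma P u) 0) as [E|E].
    + exists 0%nat. split; [lia|].
      assert (Hu : is_vertex u) by exact (proj1 Ha).
      destruct (sigma_zero P u HP Hd Hu E) as [->| ->]; [left|right]; constructor; auto.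
    + assert (Hv : sigma P v <= 0).
      { destruct (Z_le_gt_dec (sigma P v) 0) as [Hle|Hgt]; [exact Hle|]. exfalso. apply (sigma_cross P u v Hd Ha); lia. }
      destruct (IH Hv H2) as (i & Hi & Hpi). exists (S i). split; [lia|].
      destruct Hpi; [left|right]; econstructor; eauto.
Qed.

Open Scope Z_scope.

Definition step (b : bool) (s : nat * nat) : nat * nat :=
  let (x, y) := s in if b then (x, S (Nat.min x y)) else (S (Nat.min x y), y).
Definition run (w : list bool) (s : nat * nat) : nat * nat := fold_left (fun s b => step b s) w s.

Lemma run_app : forall u v s, run (u ++ v) s = run v (run u s).
Proof. intros; unfold run; rewrite fold_left_app; reflexivity. Qed.
Lemma run_snoc : forall u b s, run (u ++ [b]) s = step b (run u s).
Proof. intros; rewrite run_app; reflexivity. Qed.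

Lemma new_dist : forall P x y, nonneg P -> mat2_det P = 1 ->
  farey_dist infty (col1 P) x -> farey_dist infty (col2 P) y -> farey_dist infty (colsum P) (S (Nat.min x y)).
Proof.
  intros P x y HP Hd [Hx1 Hx2] [Hy1 Hy2]. split.
  - destruct (Nat.le_ge_cases x y).
    + rewrite Nat.min_l by auto. replace (S x) with (x + 1)%nat by lia.
      eapply path_app; [exact Hx1|]. apply path_one, adj_c1_sum; auto.
    + rewrite Nat.min_r by auto. replace (S y) with (y + 1)%nat by lia.
      eapply path_app; [exact Hy1|]. apply path_one, adj_c2_sum; auto.
  - intros m Hm.
    assert (Hs1 : sigma P infty <= 0).
    { destruct P as [a b c d]; destruct HP as (?&?&?&?); unfold sigma, infty; cbn [ma mb mc md fst snd] in *. nia. }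
    assert (Hs2 : 0 < sigma P (colsum P)).
    { destruct P as [a b c d]; unfold mat2_det in Hd; unfold sigma, colsum; cbn [ma mb mc md fst snd] in *.
      replace ((d * (a + b) - b * (c + d)) * (- c * (a + b) + a * (c + d))) with ((a*d-b*c)*(a*d-b*c)) by ring.
      rewrite Hd; lia. }
    destruct (separation P HP Hd m infty (colsum P) Hm Hs1 Hs2) as (i & Hi & [Hp|Hp]).
    + pose proof (Hx2 i Hp). lia.
    + pose proof (Hy2 i Hp). lia.
Qed.

Lemma col1_R : forall P, col1 (mat2_mul P Rm) = col1 P.
Proof. intros [a b c d]; unfold col1, Rm, mat2_mul; cbn [ma mb mc md]; f_equal; ring. Qed.
Lemma col2_R : forall P, col2 (mat2_mul P Rm) = colsum P.
Proof. intros [a b c d]; unfold col2, colsum, Rm, mat2_mul; cbn [ma mb mc md]; f_equal; ring. Qed.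
Lemma col1_L : forall P, col1 (mat2_mul P Lm) = colsum P.
Proof. intros [a b c d]; unfold col1, colsum, Lm, mat2_mul; cbn [ma mb mc md]; f_equal; ring. Qed.
Lemma col2_L : forall P, col2 (mat2_mul P Lm) = col2 P.
Proof. intros [a b c d]; unfold col2, Lm, mat2_mul; cbn [ma mb mc md]; f_equal; ring. Qed.

Theorem dp_dist : forall w,
  farey_dist infty (col1 (prodw w)) (fst (run w (0,1)%nat)) /\
  farey_dist infty (col2 (prodw w)) (snd (run w (0,1)%nat)).
Proof.
  induction w as [|b w IH] using rev_ind.
  - simpl. split.
    + split; [constructor; apply infty_vertex| intros; lia].
    + split.
      * apply path_one. apply adj_iff. split; [apply infty_vertex|]. split.
        -- unfold is_vertex; simpl. split; [reflexivity| left; lia].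
        -- reflexivity.
      * intros m Hm. destruct m; [|lia]. inversion Hm.
  - destruct IH as [H1 H2]. rewrite prodw_snoc, run_snoc.
    pose proof (prodw_nonneg w) as HP. pose proof (prodw_det w) as Hd.
    destruct (run w (0,1)%nat) as [x y]; cbn [fst snd] in *.
    destruct b; simpl.
    + rewrite col1_R, col2_R. split; auto. apply new_dist; auto.
    + rewrite col1_L, col2_L. split; auto. apply new_dist; auto.
Qed.

Fixpoint repw (w : list bool) (j : nat) : list bool :=
  match j with O => [] | S j' => w ++ repw w j' end.

Lemma act_col1 : forall A M, nonneg (mat2_mul A M) -> mat2_det (mat2_mul A M) = 1 ->
  mat2_act A (col1 M) = col1 (mat2_mul A M).
Proof.
  intros A M H1 H2. rewrite act_mv.
  replace (mv A (col1 M)) with (col1 (mat2_mul A M)) by (destruct A as [a b c d], M as [a1 b1 c1 d1]; unfold mv, col1, mat2_mul; cbn [ma mb mc md fst snd]; f_equal; ring).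
  apply normalize_vertex, col1_vertex; auto.
Qed.

Lemma orbit_col1 : forall w j, Nat.iter j (mat2_act (prodw w)) infty = col1 (prodw (repw w j)).
Proof.
  intros w j; induction j as [|j IH].
  - reflexivity.
  - simpl. rewrite IH, act_col1.
    + rewrite prodw_app; reflexivity.
    + rewrite <- prodw_app; apply prodw_nonneg.
    + rewrite <- prodw_app; apply prodw_det.
Qed.

Open Scope nat_scope.

Definition ok (s : nat * nat) : Prop := fst s <= snd s + 1 /\ snd s <= fst s + 1.
Definition dlt (s : nat * nat) : Z := (Z.of_nat (fst s) - Z.of_nat (snd s))%Z.
Definition shift (s : nat * nat) (c : nat) : nat * nat := (fst s + c, snd s + c).

Lemma step_ok : forall b s, ok s -> ok (step b s).
Proof. intros [] [x y]; unfold ok; simpl; lia. Qed.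
Lemma run_ok : forall w s, ok s -> ok (run w s).
Proof. induction w as [|b w IH]; intros s H; simpl; auto. apply IH, step_ok, H. Qed.

Lemma step_shift : forall b s c, step b (shift s c) = shift (step b s) c.
Proof. intros [] [x y] c; unfold shift; simpl; f_equal; lia. Qed.
Lemma run_shift : forall w s c, run w (shift s c) = shift (run w s) c.
Proof.
  induction w as [|b w IH]; intros s c; [reflexivity|].
  change (run (b :: w) (shift s c)) with (run w (step b (shift s c))).
  rewrite step_shift, IH. reflexivity.
Qed.

Lemma step_mono : forall b s s', ok s -> ok s' -> (dlt s <= dlt s')%Z -> (dlt (step b s) <= dlt (step b s'))%Z.
Proof. intros [] [x y] [x' y']; unfold step, ok, dlt; cbn [fst snd]; lia. Qed.
Lemma run_mono : forall w s s', ok s -> ok s' -> (dlt s <= dlt s')%Z -> (dlt (run w s) <= dlt (run w s'))%Z.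
Proof.
  induction w as [|b w IH]; intros s s' H1 H2 H3; simpl; auto.
  apply IH; try apply step_ok; auto. apply step_mono; auto.
Qed.

Lemma step_ge : forall b s, ok s -> fst s <= fst (step b s) /\ snd s <= snd (step b s).
Proof. intros [] [x y]; unfold ok; simpl; lia. Qed.
Lemma run_ge : forall w s, ok s -> fst s <= fst (run w s) /\ snd s <= snd (run w s).
Proof.
  induction w as [|b w IH]; intros s H; simpl; [lia|].
  pose proof (step_ge b s H). pose proof (IH (step b s) (step_ok b s H)). lia.
Qed.

Lemma repw_S : forall w j, repw w (S j) = repw w j ++ w.
Proof.
  intros w j; induction j as [|j IH]; simpl.
  - rewrite app_nil_r; reflexivity.
  - simpl in IH. rewrite IH at 1. rewrite app_assoc; reflexivity.
Qed.

Definition sj (w : list bool) (j : nat) : nat * nat := run (repw w j) (0,1).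

Lemma sj_S : forall w j, sj w (S j) = run w (sj w j).
Proof. intros; unfold sj; rewrite repw_S, run_app; reflexivity. Qed.

Lemma sj_ok : forall w j, ok (sj w j).
Proof. intros; apply run_ok; unfold ok; simpl; lia. Qed.

Lemma same_dlt_shift : forall s s', ok s -> ok s' -> dlt s = dlt s' -> fst s <= fst s' -> s' = shift s (fst s' - fst s).
Proof. intros [x y] [x' y']; unfold ok, dlt, shift; simpl; intros; f_equal; lia. Qed.

Theorem periodic : forall w, exists n, run w (sj w 2) = shift (sj w 2) n /\
  forall j, sj w (j + 2) = shift (sj w 2) (n * j).
Proof.
  intros w.
  assert (Hm : forall j, (dlt (sj w j) <= dlt (sj w (S j)))%Z).
  { induction j as [|j IH].
    - pose proof (sj_ok w 1) as H. change (sj w 0) with (0,1). unfold ok, dlt in *. cbn [fst snd]. lia.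
    - rewrite (sj_S w (S j)). rewrite (sj_S w j) at 1. apply run_mono; [apply sj_ok | apply sj_ok | exact IH]. }
  assert (He : forall i j, dlt (sj w i) = dlt (sj w j) -> dlt (sj w (S i)) = dlt (sj w (S j))).
  { intros i j H. rewrite !sj_S. apply Z.le_antisymm; apply run_mono; auto using sj_ok; lia. }
  assert (H23 : dlt (sj w 2) = dlt (sj w 3)).
  { pose proof (Hm 0). pose proof (Hm 1). pose proof (Hm 2).
    pose proof (sj_ok w 0). pose proof (sj_ok w 2). pose proof (sj_ok w 3).
    assert (dlt (sj w 0) = (-1)%Z) by reflexivity.
    unfold ok, dlt in *.
    destruct (Z.eq_dec (dlt (sj w 0)) (dlt (sj w 1))) as [E|E].
    - apply He in E. apply He in E. exact E.
    - destruct (Z.eq_dec (dlt (sj w 1)) (dlt (sj w 2))) as [E'|E'].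
      + apply He in E'. exact E'.
      + unfold dlt in *. lia. }
  set (n := fst (sj w 3) - fst (sj w 2)).
  assert (Hs3 : sj w 3 = shift (sj w 2) n).
  { apply same_dlt_shift; auto using sj_ok. rewrite (sj_S w 2). apply (proj1 (run_ge w _ (sj_ok w 2))). }
  exists n. split; [rewrite <- sj_S; exact Hs3|].
  induction j as [|j IH].
  - simpl. destruct (sj w 2); unfold shift; simpl; f_equal; lia.
  - replace (S j + 2) with (S (j + 2)) by lia. rewrite sj_S, IH, run_shift, <- sj_S, Hs3.
    destruct (sj w 2); unfold shift; simpl; f_equal; lia.
Qed.

Open Scope Z_scope.

Fixpoint pell (k : nat) : Z :=
  match k with O => 1 | S O => 0 | S (S k' as k1) => 2 * pell k1 + pell k' end.

Lemma pell_SS : forall k, pell (S (S k)) = 2 * pell (S k) + pell k.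
Proof. reflexivity. Qed.

Lemma pell_nonneg : forall k, 0 <= pell k.
Proof.
  assert (H : forall k, 0 <= pell k /\ 0 <= pell (S k)).
  { induction k as [|k [IH1 IH2]]; [simpl; lia|]. split; auto. rewrite pell_SS; lia. }
  intros k; apply H.
Qed.

Definition I1 (k : nat) (P : mat2) : Prop :=
  pell (S (S k)) <= ma P /\ pell (S k) <= mb P /\ pell (S k) <= mc P /\ pell k <= md P.
Definition I0 (k : nat) (P : mat2) : Prop :=
  pell (S k) <= ma P /\ pell (S k) <= mb P /\ pell (S (S k)) <= ma P + mb P /\
  pell k <= mc P /\ pell k <= md P /\ pell (S k) <= mc P + md P.
Definition Im (k : nat) (P : mat2) : Prop :=
  pell (S k) <= ma P /\ pell (S (S k)) <= mb P /\ pell k <= mc P /\ pell (S k) <= md P.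

Definition InvS (s : nat * nat) (P : mat2) : Prop :=
  (fst s = S (snd s) /\ I1 (snd s) P) \/ (fst s = snd s /\ I0 (fst s) P) \/ (snd s = S (fst s) /\ Im (fst s) P).

Lemma InvS_step : forall s P b, nonneg P -> InvS s P -> InvS (step b s) (mat2_mul P (lett b)).
Proof.
  intros [x y] [a b c d] bb HP H. destruct HP as (Ha&Hb&Hc&Hd).
  unfold InvS, I1, I0, Im in *; cbn [fst snd ma mb mc md] in *.
  destruct bb; unfold step, lett, Rm, Lm, mat2_mul; cbn [fst snd ma mb mc md];
  destruct H as [(E & H)|[(E & H)|(E & H)]]; subst.
  - replace (S (Nat.min (S y) y)) with (S y) by lia.
    right; left; split; [reflexivity|]. rewrite !pell_SS in *.
    pose proof (pell_nonneg y); pose proof (pell_nonneg (S y)). lia.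
  - replace (S (Nat.min y y)) with (S y) by lia.
    right; right; split; [reflexivity|]. rewrite !pell_SS in *.
    pose proof (pell_nonneg y); pose proof (pell_nonneg (S y)). lia.
  - replace (S (Nat.min x (S x))) with (S x) by lia.
    right; right; split; [reflexivity|].
    pose proof (pell_nonneg x); pose proof (pell_nonneg (S x)); pose proof (pell_nonneg (S (S x))). lia.
  - replace (S (Nat.min (S y) y)) with (S y) by lia.
    left; split; [reflexivity|].
    pose proof (pell_nonneg y); pose proof (pell_nonneg (S y)); pose proof (pell_nonneg (S (S y))). lia.
  - replace (S (Nat.min y y)) with (S y) by lia.
    left; split; [reflexivity|]. lia.
  - replace (S (Nat.min x (S x))) with (S x) by lia.
    right; left; split; [reflexivity|]. rewrite !pell_SS in *.
    pose proof (pell_nonneg x); pose proof (pell_nonneg (S x)). lia.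
Qed.

Lemma pell_inv : forall z, InvS (run z (1,0)%nat) (prodw z).
Proof.
  induction z as [|b z IH] using rev_ind.
  - left. unfold I1; simpl. lia.
  - rewrite run_snoc, prodw_snoc. apply InvS_step; auto. apply prodw_nonneg.
Qed.

Lemma trace_from_1 : forall z n, run z (1,0)%nat = (S n, n) -> pell (S (S n)) + pell n <= mat2_tr (prodw z).
Proof.
  intros z n H. pose proof (pell_inv z) as Hi. rewrite H in Hi.
  unfold InvS in Hi; cbn [fst snd] in Hi. destruct Hi as [(_&Hi)|[(E&_)|(E&_)]]; try lia.
  unfold I1, mat2_tr in *. lia.
Qed.

Definition flipm (M : mat2) : mat2 := Mat2 (md M) (mc M) (mb M) (ma M).
Definition swp (s : nat * nat) : nat * nat := (snd s, fst s).

Lemma step_mirror : forall b s, step (negb b) (swp s) = swp (step b s).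
Proof. intros [] [x y]; unfold step, swp; cbn [fst snd negb]; f_equal; lia. Qed.

Lemma run_mirror : forall z s, run (map negb z) (swp s) = swp (run z s).
Proof.
  induction z as [|b z IH]; intros s; [reflexivity|].
  change (run (map negb (b :: z)) (swp s)) with (run (map negb z) (step (negb b) (swp s))).
  rewrite step_mirror, IH. reflexivity.
Qed.

Lemma prodw_mirror : forall z, prodw (map negb z) = flipm (prodw z).
Proof.
  induction z as [|b z IH]; [reflexivity|].
  change (prodw (map negb (b :: z))) with (mat2_mul (lett (negb b)) (prodw (map negb z))).
  change (prodw (b :: z)) with (mat2_mul (lett b) (prodw z)).
  rewrite IH. destruct (prodw z) as [a1 b1 c1 d1]. destruct b; unfold flipm, lett, Rm, Lm, mat2_mul; cbn [negb ma mb mc md]; mat_eq.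
Qed.

Lemma trace_from_m1 : forall z n, run z (0,1)%nat = (n, S n) -> pell (S (S n)) + pell n <= mat2_tr (prodw z).
Proof.
  intros z n H.
  assert (H' : run (map negb z) (1,0)%nat = (S n, n)).
  { change (1,0)%nat with (swp (0,1)%nat). rewrite run_mirror, H. reflexivity. }
  pose proof (trace_from_1 _ _ H') as Ht. rewrite prodw_mirror in Ht.
  unfold flipm, mat2_tr in *; cbn [ma md] in *. lia.
Qed.

Lemma shift_inj : forall s t c, shift s c = shift t c -> s = t.
Proof. intros [x y] [x' y'] c H; unfold shift in H; cbn [fst snd] in H. inversion H. f_equal; lia. Qed.

Lemma trace_stretch : forall z s n, ok s -> dlt s <> 0 -> run z s = shift s n ->
  pell (S (S n)) + pell n <= mat2_tr (prodw z).
Proof.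
  intros z [x y] n Hok Hd H. unfold ok, dlt in *; cbn [fst snd] in *.
  destruct (Nat.lt_ge_cases y x).
  - assert (x = S y) by lia. subst.
    apply trace_from_1. apply (shift_inj _ _ y).
    rewrite <- run_shift. replace (shift (1,0)%nat y) with (S y, y) by (unfold shift; simpl; f_equal; lia).
    rewrite H. unfold shift; simpl. f_equal; lia.
  - assert (y = S x) by lia. subst.
    apply trace_from_m1. apply (shift_inj _ _ x).
    rewrite <- run_shift. replace (shift (0,1)%nat x) with (x, S x) by (unfold shift; simpl; f_equal; lia).
    rewrite H. unfold shift; simpl. f_equal; lia.
Qed.

Lemma tr_comm : forall M N, mat2_tr (mat2_mul M N) = mat2_tr (mat2_mul N M).
Proof. intros [a b c d] [a1 b1 c1 d1]; unfold mat2_tr, mat2_mul; cbn [ma md]; ring. Qed.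

Theorem trace_bound : forall w n, w <> [] -> run w (sj w 2) = shift (sj w 2) n ->
  pell (S (S n)) + pell n <= mat2_tr (prodw w).
Proof.
  intros w n Hw H. pose proof (sj_ok w 2) as Hs. revert H Hs. generalize (sj w 2). intros s H Hs.
  destruct (Z.eq_dec (dlt s) 0) as [E|E].
  - destruct w as [|b w']; [congruence|].
    replace (mat2_tr (prodw (b :: w'))) with (mat2_tr (prodw (w' ++ [b]))) by (rewrite prodw_snoc, tr_comm; reflexivity).
    apply (trace_stretch (w' ++ [b]) (step b s)).
    + apply step_ok; auto.
    + destruct b, s as [x y]; unfold ok, dlt, step in *; cbn [fst snd] in *; lia.
    + rewrite run_snoc. change (run w' (step b s)) with (run (b :: w') s). rewrite H, step_shift. reflexivity.
  - apply (trace_stretch w s); auto.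
Qed.

Lemma M2_pow : forall n, mat2_pow M2 n = Mat2 (pell (S (S n))) (pell (S n)) (pell (S n)) (pell n).
Proof.
  induction n as [|n IH]; [reflexivity|].
  simpl mat2_pow. rewrite IH. unfold M2, mat2_mul; cbn [ma mb mc md].
  apply mat2_ext; cbn [ma mb mc md]; rewrite ?pell_SS; ring.
Qed.

Lemma M2_tr : forall n, mat2_tr (mat2_pow M2 n) = pell (S (S n)) + pell n.
Proof. intros; rewrite M2_pow; reflexivity. Qed.

Open Scope R_scope.
Lemma M2_tr_real : forall n, IZR (pell (S (S n)) + pell n) = (1 + sqrt 2) ^ n + (1 - sqrt 2) ^ n.
Proof.
  assert (Hs : sqrt 2 * sqrt 2 = 2) by (apply sqrt_sqrt; lra).
  assert (H : forall n, IZR (pell (S (S n)) + pell n) = (1 + sqrt 2) ^ n + (1 - sqrt 2) ^ n /\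
                        IZR (pell (S (S (S n))) + pell (S n)) = (1 + sqrt 2) ^ (S n) + (1 - sqrt 2) ^ (S n)).
  { induction n as [|n [IH1 IH2]].
    - simpl. split; [lra|]. lra.
    - split; auto.
      replace (pell (S (S (S (S n)))) + pell (S (S n)))%Z with
        (2 * (pell (S (S (S n))) + pell (S n)) + (pell (S (S n)) + pell n))%Z
        by (rewrite !(pell_SS (S (S n))), !(pell_SS (S n)), !(pell_SS n); ring).
      rewrite plus_IZR, mult_IZR, IH1, IH2.
      assert (Ha : (1 + sqrt 2) * (1 + sqrt 2) = 2 * (1 + sqrt 2) + 1) by nra.
      assert (Hb : (1 - sqrt 2) * (1 - sqrt 2) = 2 * (1 - sqrt 2) + 1) by nra.
      replace ((1 + sqrt 2) ^ (S (S n))) with ((2 * (1 + sqrt 2) + 1) * (1 + sqrt 2) ^ n)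
        by (rewrite <- Ha; simpl; ring).
      replace ((1 - sqrt 2) ^ (S (S n))) with ((2 * (1 - sqrt 2) + 1) * (1 - sqrt 2) ^ n)
        by (rewrite <- Hb; simpl; ring).
      simpl. ring. }
  intros n; apply H.
Qed.

Open Scope R_scope.

Lemma le_of_eps : forall x y, (forall eps, eps > 0 -> x < y + 2 * eps) -> x <= y.
Proof.
  intros x y H. destruct (Rle_dec x y) as [Hle|Hgt]; auto.
  exfalso. assert (Hp : (x - y) / 4 > 0) by lra. specialize (H _ Hp). lra.
Qed.

Lemma big_j : forall eps K N, eps > 0 -> exists j, (j >= N)%nat /\ (2 <= j)%nat /\ K < eps * INR j.
Proof.
  intros eps K N He. destruct (INR_archimed eps K He) as [m Hm].
  exists (N + m + 2)%nat. split; [lia|]. split; [lia|].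
  assert (INR m <= INR (N + m + 2)) by (apply le_INR; lia). nra.
Qed.

Lemma liminf_lin : forall (d : nat -> nat) l c K, is_liminf (fun j => INR (d j) / INR j) l ->
  (forall j, (2 <= j)%nat -> INR (d j) <= c * INR j + K /\ c * INR j <= INR (d j) + K) -> l = c.
Proof.
  intros d l c K [H1 H2] Hb.
  assert (Hj : forall j, (2 <= j)%nat -> 0 < INR j /\ INR (d j) / INR j * INR j = INR (d j)).
  { intros j Hj. assert (0 < INR j) by (apply lt_0_INR; lia). split; auto. field. lra. }
  apply Rle_antisym; apply le_of_eps; intros eps He.
  - destruct (H1 eps He) as [N HN].
    destruct (big_j eps K N He) as (j & Hj1 & Hj2 & Hj3).
    specialize (HN j Hj1). destruct (Hb j Hj2) as [Hb1 Hb2]. destruct (Hj j Hj2) as [Hpos Heq].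
    set (u := INR (d j) / INR j) in *.
    assert ((l - eps) * INR j < u * INR j) by (apply Rmult_lt_compat_r; auto).
    assert ((l - 2 * eps - c) * INR j < 0) by nra.
    assert (l - 2 * eps - c < 0).
    { destruct (Rlt_dec (l - 2*eps - c) 0); auto. exfalso. nra. }
    lra.
  - destruct (big_j eps K O He) as (m & _ & Hm2 & Hm3).
    destruct (H2 eps He m) as (j & Hj1 & Hj2).
    assert (Hj2' : (2 <= j)%nat) by lia.
    destruct (Hb j Hj2') as [Hb1 Hb2]. destruct (Hj j Hj2') as [Hpos Heq].
    assert (INR m <= INR j) by (apply le_INR; lia).
    set (u := INR (d j) / INR j) in *.
    assert (u * INR j < (l + eps) * INR j) by (apply Rmult_lt_compat_r; auto).
    assert ((c - l - 2 * eps) * INR j < 0) by nra.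
    assert (c - l - 2 * eps < 0).
    { destruct (Rlt_dec (c - l - 2*eps) 0); auto. exfalso. nra. }
    lra.
Qed.

Open Scope Z_scope.

Definition negm (M : mat2) : mat2 := Mat2 (- ma M) (- mb M) (- mc M) (- md M).

Lemma act_negm : forall M v, mat2_act (negm M) v = mat2_act M v.
Proof.
  intros [a b c d] [x y]. rewrite !act_mv. unfold mv, negm; cbn [ma mb mc md fst snd].
  rewrite <- normalize_opp. f_equal; f_equal; ring.
Qed.

Lemma iter_vertex : forall A j v, mat2_det A = 1 -> is_vertex v -> is_vertex (Nat.iter j (mat2_act A) v).
Proof. intros A j v Hd Hv; induction j; simpl; auto. apply act_vertex; auto. Qed.

Lemma path_iter : forall A j m a b, mat2_det A = 1 -> farey_path m a b ->
  farey_path m (Nat.iter j (mat2_act A) a) (Nat.iter j (mat2_act A) b).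
Proof. intros A j m a b Hd H; induction j; simpl; auto. apply path_act; auto. Qed.

Lemma act_inv : forall g gi v, mat2_mul gi g = mat2_id -> is_vertex v -> mat2_act gi (mat2_act g v) = v.
Proof. intros g gi v H Hv. rewrite <- act_mul, H. apply act_id; auto. Qed.

Lemma iter_conj : forall f g gi A, (forall v, mat2_act f v = mat2_act (mat2_mul g (mat2_mul A gi)) v) ->
  mat2_mul g gi = mat2_id -> mat2_mul gi g = mat2_id -> mat2_det A = 1 -> mat2_det gi = 1 ->
  forall j v, is_vertex v -> Nat.iter j (mat2_act f) v = mat2_act g (Nat.iter j (mat2_act A) (mat2_act gi v)).
Proof.
  intros f g gi A Hf H1 H2 HA Hgi j v Hv. induction j as [|j IH]; simpl.
  - symmetry. rewrite <- act_mul, H1. apply act_id; auto.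
  - rewrite IH, Hf, !act_mul. f_equal. f_equal. apply act_inv; auto.
    apply iter_vertex; auto. apply act_vertex; auto.
Qed.

Open Scope R_scope.
Theorem mainTheorem14 (f : mat2) (l : R) :
  in_SL2Z f -> anosov f -> stable_translation_length f l ->
  exists n : nat, l = INR n /\
    (Z.abs (mat2_tr f) >= mat2_tr (mat2_pow M2 n))%Z /\
    IZR (mat2_tr (mat2_pow M2 n)) = (1 + sqrt 2) ^ n + (1 - sqrt 2) ^ n.
Proof.
  Local Open Scope Z_scope.
  intros Hdet Han [d [Hd Hlim]]. unfold in_SL2Z, anosov in *.
  assert (Hf0 : exists f0, mat2_det f0 = 1 /\ mat2_tr f0 = Z.abs (mat2_tr f) /\ forall v, mat2_act f v = mat2_act f0 v).
  { destruct (Z_le_gt_dec 0 (mat2_tr f)).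
    - exists f. split; auto. split; auto. rewrite Z.abs_eq; auto.
    - exists (negm f). split; [|split].
      + destruct f as [a b c dd]; unfold mat2_det, negm in *; cbn [ma mb mc md] in *. rewrite <- Hdet; ring.
      + destruct f as [a b c dd]; unfold mat2_tr, negm in *; cbn [ma mb mc md] in *. lia.
      + intros v; rewrite act_negm; reflexivity. }
  destruct Hf0 as (f0 & Hd0 & Ht0 & Hact0).
  destruct (reduce f0 Hd0 ltac:(lia)) as (g & gi & A & Hggi & Hgig & Hdg & Hdgi & Hf0A & HnnA & HdA & Hconn).
  destruct (decomp A HnnA HdA) as [w Hw].
  assert (HtrA : mat2_tr A = Z.abs (mat2_tr f)).
  { rewrite <- Ht0, Hf0A, tr_comm, <- mul_assoc, Hgig, mul_id_r. reflexivity. }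
  assert (Hwne : w <> []).
  { intro Hn. rewrite Hn in Hw. rewrite <- Hw in HtrA. change (mat2_tr (prodw [])) with 2 in HtrA. lia. }
  destruct (periodic w) as (n & Hper & Hlin).
  exists n. split; [|split].
  2:{ rewrite M2_tr. pose proof (trace_bound w n Hwne Hper). rewrite Hw, HtrA in H. lia. }
  2:{ rewrite M2_tr. apply M2_tr_real. }
  set (u := mat2_act gi infty).
  destruct Hconn as [e He].
  assert (Hu : farey_path e infty u).
  { apply path_rev. pose proof (path_act gi _ _ _ Hdgi He) as H. rewrite act_inv in H; auto. apply infty_vertex. }
  assert (Hit : forall j, Nat.iter j (mat2_act f) infty = mat2_act g (Nat.iter j (mat2_act A) u)).
  { intros j. apply (iter_conj f g gi A); auto. intros v; rewrite Hact0, Hf0A; reflexivity. apply infty_vertex. }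
  set (D := fun j => fst (sj w j)).
  assert (HD : forall j, farey_dist infty (Nat.iter j (mat2_act A) infty) (D j)).
  { intros j. rewrite <- Hw, orbit_col1. apply dp_dist. }
  assert (Hcmp : forall j, (d j <= D j + 2 * e /\ D j <= d j + 2 * e)%nat).
  { intros j. set (X := Nat.iter j (mat2_act A) infty). set (Y := Nat.iter j (mat2_act A) u).
    assert (HXY : farey_path e X Y) by (apply path_iter; auto).
    specialize (Hd j). rewrite Hit in Hd. fold Y in Hd. specialize (HD j). fold X in HD.
    split.
    - apply (dist_le _ _ _ _ Hd).
      assert (Hp : farey_path (e + D j + e) u Y).
      { eapply path_app; [eapply path_app; [apply path_rev; exact Hu| exact (proj1 HD)]| exact HXY]. }
      pose proof (path_act g _ _ _ Hdg Hp) as Hp'. unfold u in Hp'. rewrite <- act_mul, Hggi, act_id in Hp' by apply infty_vertex.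
      replace (D j + 2 * e)%nat with (e + D j + e)%nat by lia. exact Hp'.
    - apply (dist_le _ _ _ _ HD).
      pose proof (path_act gi _ _ _ Hdgi (proj1 Hd)) as Hp. rewrite act_inv in Hp; auto.
      2:{ apply iter_vertex; auto. apply act_vertex; auto. apply infty_vertex. }
      fold u in Hp.
      assert (Hp2 : farey_path (e + d j + e) infty X).
      { eapply path_app; [eapply path_app; [exact Hu| exact Hp]| apply path_rev; exact HXY]. }
      replace (d j + 2 * e)%nat with (e + d j + e)%nat by lia. exact Hp2. }
  apply (liminf_lin d l (INR n) (INR (D 2 + 2 * n + 2 * e)%nat)); auto.
  intros j Hj.
  assert (HDj : D j = (D 2 + n * (j - 2))%nat).
  { unfold D. replace j with (j - 2 + 2)%nat at 1 by lia. rewrite Hlin. unfold shift. simpl. lia. }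
  destruct (Hcmp j) as [C1 C2].
  assert (N1 : (d j <= n * j + (D 2 + 2 * n + 2 * e))%nat) by nia.
  assert (N2 : (n * j <= d j + (D 2 + 2 * n + 2 * e))%nat) by nia.
  split.
  - rewrite <- mult_INR, <- plus_INR. apply le_INR. lia.
  - rewrite <- mult_INR, <- plus_INR. apply le_INR. lia.
Qed.
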